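(* Let $\Phi=\varphi\land\bigwedge RE\land\bigwedge DI$ be an $\mathcal{ALCQIO}_{b,Re}$-formula over $\tau$. There exists an $\mathcal{ALCQIO}_b$-formula $\mathit{semi}(\Phi)$ over $\tau$ such that for every (finite) $\tau$-structure $\mathcal{M}$: $\mathcal{M}\models\mathit{semi}(\Phi)$ iff $\mathcal{M}$ is $\Phi$-semi-connected.
   Context: Structures are finite; $\tau$ has atomic concepts, atomic roles (a subset $\mathsf{N_F}$ functional, interpreted as partial functions) and nominals. $\mathcal{ALCQIO}_b$: concepts built from atomic concepts and nominals using $\sqcap,\sqcup,\neg,\exists r.C,\exists^{\le n}r.C$ for roles atomic or inverse; formulae are Boolean combinations of inclusions $C\sqsubseteq D$ and equalities $C\equiv D$; standard semantics. A reachability assertion $\mathit{Reach}(B,S,A)$ has atomic concepts $A,B$ and $S\subseteq\mathsf{N_F}$; $\mathit{Disj}(A_1,A_2)$ is $A_1\sqcap A_2\equiv\bot$. An $\mathcal{ALCQIO}_{b,Re}$-formula is $\Phi=\varphi\land\bigwedge RE\land\bigwedge DI$ with $\varphi\in\mathcal{ALCQIO}_b$, $RE$ a finite set of reachability assertions, $DI$ a finite set of disjointness assertions, compatible (for every two assertions $\mathit{Reach}(B_1,S_1,A_1),\mathit{Reach}(B_2,S_2,A_2)\in RE$ with $S_1\cap S_2\ne\emptyset$, $\mathit{Disj}(A_1,A_2)\in DI$). $\mathit{assoc}(\Phi)=\varphi\land\bigwedge_{\mathit{Reach}(B,S,A)\in RE}(B\sqsubseteq A)\land\bigwedge DI$.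 For $\mathit{Reach}(B,S,A)\in RE$, $D$ denotes the directed graph on vertex set $A^{\mathcal{M}}$ with edges $\bigcup_{s\in S}s^{\mathcal{M}}\cap(A^{\mathcal{M}}\times A^{\mathcal{M}})$. $\mathcal{M}$ is $\Phi$-semi-connected if $\mathcal{M}\models\mathit{assoc}(\Phi)$ and for every $\mathit{Reach}(B,S,A)\in RE$ and $u\in A^{\mathcal{M}}$, $u$ is reachable in the corresponding graph from $B^{\mathcal{M}}$ or from a directed cycle of that graph. *)

(* Defs.v *)
From mathcomp Require Import all_boot.
Set Implicit Arguments. Unset Strict Implicit. Unset Printing Implicit Defensive.

Section Syntax.
(* The signature tau: atomic concepts CN, atomic roles RN, nominals IN. *)
Variables (CN RN IN : finType).

Inductive role := RAtom of RN | RInv of RN.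

Inductive concept :=
| CTop
| CAtom of CN
| CNom of IN
| CNot of concept
| CAnd of concept & concept
| COr of concept & concept
| CEx of role & concept
| CAtMost of nat & role & concept.

Inductive formula :=
| FIncl of concept & concept
| FEquiv of concept & concept
| FNeg of formula
| FConj of formula & formula
| FDisj of formula & formula.

(* Reach(B,S,A) is represented as ((B, S), A) *)
Definition reach := (CN * {set RN} * CN)%type.
Definition disj := (CN * CN)%type.
End Syntax.

Record structure (CN RN IN : finType) (D : finType) := Structure {
  cI : CN -> pred D;
  rI : RN -> rel D;
  oI : IN -> D }.

Section Semantics.
Variables (CN RN IN : finType) (D : finType) (M : structure CN RN IN D).

Definition is_tau_structure (NF : {set RN}) : Prop :=
  forall r, r \in NF -> forall x y z, rI M r x y -> rI M r x z -> y = z.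

Definition rext (r : role RN) : rel D :=
  match r with
  | RAtom s => rI M s
  | RInv s => fun x y => rI M s y x
  end.

Fixpoint cext (C : concept CN RN IN) : pred D :=
  match C with
  | CTop => fun _ => true
  | CAtom A => cI M A
  | CNom o => fun x => x == oI M o
  | CNot C1 => fun x => ~~ cext C1 x
  | CAnd C1 C2 => fun x => cext C1 x && cext C2 x
  | COr C1 C2 => fun x => cext C1 x || cext C2 x
  | CEx r C1 => fun x => [exists y, rext r x y && cext C1 y]
  | CAtMost n r C1 => fun x => #|[pred y | rext r x y && cext C1 y]| <= n
  end.

Fixpoint sat (f : formula CN RN IN) : Prop :=
  match f with
  | FIncl C1 C2 => forall x, cext C1 x -> cext C2 x
  | FEquiv C1 C2 => forall x, cext C1 x = cext C2 x
  | FNeg g => ~ sat g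
  | FConj g h => sat g /\ sat h
  | FDisj g h => sat g \/ sat h
  end.

Definition sat_disj (d : disj CN) : Prop := forall x, ~~ (cI M d.1 x && cI M d.2 x).

Definition sat_assoc (phi : formula CN RN IN) (RE : seq (reach CN RN))
    (DI : seq (disj CN)) : Prop :=
  sat phi /\ (forall R, R \in RE -> forall x, cI M R.1.1 x -> cI M R.2 x)
  /\ (forall d, d \in DI -> sat_disj d).

Definition reach_edge (R : reach CN RN) : rel D :=
  fun x y => [&& cI M R.2 x, cI M R.2 y & [exists s in R.1.2, rI M s x y]].

Definition on_cycle (e : rel D) (v : D) : bool := [exists w, e v w && connect e w v].

Definition semi_connected (phi : formula CN RN IN) (RE : seq (reach CN RN))
    (DI : seq (disj CN)) : Prop :=
  sat_assoc phi RE DI /\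
  forall R, R \in RE -> forall u, cI M R.2 u ->
    (exists b, cI M R.1.1 b /\ connect (reach_edge R) b u) \/
    (exists v, on_cycle (reach_edge R) v /\ connect (reach_edge R) v u).
End Semantics.

Definition reach_funct (CN RN : finType) (NF : {set RN}) (RE : seq (reach CN RN)) :=
  forall R, R \in RE -> R.1.2 \subset NF.

Definition compatible (CN RN : finType) (RE : seq (reach CN RN)) (DI : seq (disj CN)) :=
  forall R1 R2, R1 \in RE -> R2 \in RE -> R1 != R2 ->
    R1.1.2 :&: R2.1.2 != set0 ->
    ((R1.2, R2.2) \in DI) || ((R2.2, R1.2) \in DI).

(* Main.v *)
Require Import Defs.
From mathcomp Require Import all_boot.
From Stdlib Require Import Setoid.

Lemma cyc_lemma (D : finType) (e : rel D) n (X : {set D}) :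
  #|X| <= n -> (exists x, x \in X) ->
  (forall x, x \in X -> exists2 y, y \in X & e y x) ->
  exists2 v, v \in X & on_cycle e v.
Proof.
elim: n X => [|n IH] X hc [x hx] hp.
  by move: hc; rewrite leqn0 cards_eq0 => /eqP hc; rewrite hc inE in hx.
have [y hy eyx] := hp x hx.
case cxy: (connect e x y).
  by exists y => //; apply/existsP; exists x; rewrite eyx.
set Y := [set z in X | connect e z y].
have sub: Y \proper X.
  apply/properP; split.
    by apply/subsetP => z; rewrite inE => /andP[].
  by exists x => //; rewrite inE cxy andbF.
have [v hv cv] : exists2 v, v \in Y & on_cycle e v.
  apply: IH.
  - by have := leq_trans (proper_card sub) hc; rewrite ltnS.
  - by exists y; rewrite inE hy connect0.
  - move=> z; rewrite inE => /andP[hzX czy].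
    have [w hw ewz] := hp z hzX.
    exists w => //; rewrite inE hw /=.
    exact: connect_trans (connect1 ewz) czy.
by exists v => //; move: hv; rewrite inE => /andP[].
Qed.

Lemma connect_pred {D : finType} {e : rel D} {x u} :
  connect e x u -> x = u \/ exists y, e y u.
Proof.
move=> /connectP[p pth ->].
elim/last_ind: p pth => [|p z _] pth; [by left | right].
rewrite rcons_path in pth; case/andP: pth => _ h.
by exists (last x p); rewrite last_rcons.
Qed.

Section Build.
Variables (CN RN IN : finType).

Definition FTop : formula CN RN IN := FIncl (CTop _ _ _) (CTop _ _ _).

Definition bigF (T : Type) (f : T -> formula CN RN IN) (l : seq T) :=
  foldr (fun x acc => FConj (f x) acc) FTop l.
Arguments bigF {T}.

Lemma sat_bigF (D : finType) (M : structure CN RN IN D) (T : eqType)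
  (f : T -> formula CN RN IN) (l : seq T) :
  sat M (bigF f l) <-> (forall x, x \in l -> sat M (f x)).
Proof.
elim: l => [|a l IH] /=; first by split => // _ x.
split.
  by move=> [ha /IH hl] x; rewrite inE => /orP[/eqP -> | /hl].
move=> h; split; first by apply: h; rewrite inE eqxx.
by apply/IH => x hx; apply: h; rewrite inE hx orbT.
Qed.

Definition bigOr (S : {set RN}) (A : CN) : concept CN RN IN :=
  foldr (fun s C => COr (CEx (RInv s) (CAtom _ _ A)) C) (CNot (CTop _ _ _)) (enum S).

Lemma cext_bigOr (D : finType) (M : structure CN RN IN D) S A x :
  cext M (bigOr S A) x = [exists s in S, exists y, rI M s y x && cI M A y].
Proof.
rewrite /bigOr.
have -> : [exists s in S, exists y, rI M s y x && cI M A y] =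
   has (fun s => [exists y, rI M s y x && cI M A y]) (enum S).
  apply/existsP/hasP => [[s /andP[hs h]]|[s hs h]]; exists s => //.
    by rewrite mem_enum.
  by rewrite -mem_enum hs.
elim: (enum S) => [|a l IH] //=.
by rewrite IH.
Qed.

Definition assocF (R : reach CN RN) : formula CN RN IN :=
  FIncl (CAtom _ _ R.1.1) (CAtom _ _ R.2).
Definition disjF (d : disj CN) : formula CN RN IN :=
  FEquiv (CAnd (CAtom _ _ d.1) (CAtom _ _ d.2)) (CNot (CTop _ _ _)).
Definition reachF (R : reach CN RN) : formula CN RN IN :=
  FIncl (CAtom _ _ R.2) (COr (CAtom _ _ R.1.1) (bigOr R.1.2 R.2)).

End Build.
Arguments bigF {CN RN IN T}.

Theorem lemma8 (CN RN IN : finType) (NF : {set RN})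
    (phi : formula CN RN IN) (RE : seq (reach CN RN)) (DI : seq (disj CN)) :
  reach_funct NF RE -> compatible RE DI ->
  exists semi : formula CN RN IN,
    forall (D : finType) (M : structure CN RN IN D),
      is_tau_structure M NF ->
      (sat M semi <-> semi_connected M phi RE DI).
Proof.
move=> _ _.
exists (FConj phi (FConj (bigF (@assocF _ _ _) RE)
          (FConj (bigF (@disjF _ _ _) DI) (bigF (@reachF _ _ _) RE)))).
move=> D M _ /=.
rewrite !sat_bigF.
have hdisj : forall d : disj CN, sat M (@disjF CN RN IN d) <-> sat_disj M d.
  move=> d; rewrite /disjF /sat_disj /=; split => h x.
    by rewrite h.
  by have := h x; case: (_ && _).
split.
  move=> [hphi [has [hdi hre]]]; split.
    split => //; split; first by move=> R /has /= h.
    by move=> d /hdi /hdisj.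
  move=> R hR u hu.
  set e := reach_edge M R.
  set X := [set x | cI M R.2 x && connect e x u].
  case hb: [exists x in X, cI M R.1.1 x].
    case/existsP: hb => x /andP[]; rewrite inE => /andP[_ c] b.
    by left; exists x.
  right.
  have [v hv cv] : exists2 v, v \in X & on_cycle e v.
    apply: (@cyc_lemma _ e #|X|) => //.
      by exists u; rewrite inE hu connect0.
    move=> x; rewrite inE => /andP[hx cxu].
    have := hre R hR x hx; rewrite /= cext_bigOr.
    have -> : cI M R.1.1 x = false.
      apply/negP => bx; move/negbT: hb => /negP; apply.
      by apply/existsP; exists x; rewrite inE hx cxu bx.
    case/existsP => s /andP[hs /existsP[y /andP[rsy ay]]].
    have eyx : e y x.
      by rewrite /e /reach_edge ay hx /=; apply/existsP; exists s; rewrite hs.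
    exists y => //; rewrite inE ay /=.
    exact: connect_trans (connect1 eyx) cxu.
  by exists v; split => //; move: hv; rewrite inE => /andP[].
move=> [[hphi [has hdi]] hsc]; split => //; split.
  by move=> R /has.
split; first by move=> d /hdi /hdisj.
move=> R hR u /= hu.
rewrite cext_bigOr.
have pred_ok : forall y, reach_edge M R y u ->
    [exists s in R.1.2, exists y, rI M s y u && cI M R.2 y].
  move=> y /and3P[ay _ /existsP[s /andP[hs rs]]].
  by apply/existsP; exists s; rewrite hs; apply/existsP; exists y; rewrite rs ay.
case: (hsc R hR u hu) => [[b [hb cb]] | [v [cv cvu]]].
  case: (connect_pred cb) => [<- | [y eyu]]; first by rewrite hb.
  by rewrite (pred_ok y eyu) orbT.
case: (connect_pred cvu) => [ev | [y eyu]]; last by rewrite (pred_ok y eyu) orbT.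
subst v.
case/existsP: cv => w /andP[euw cwu].
case: (connect_pred cwu) => [ewu | [y eyu]]; last by rewrite (pred_ok y eyu) orbT.
subst w; by rewrite (pred_ok u euw) orbT.
Qed.
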